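(* For every $n\ge1$ and masses $m_i>0$, the $n$-body problem in ${\bf H}^2$ has no parabolic relative equilibria: there is no solution defined for all $t\in\mathbb R$ of the form $x_i=a_i-b_it+c_it$, $y_i=a_it+b_i(1-t^2/2)+c_it^2/2$, $z_i=a_it-b_it^2/2+c_i(1+t^2/2)$, $i=1,\dots,n$, with real constants $a_i,b_i,c_i$ satisfying $a_i^2+b_i^2-c_i^2=-1$.
   Context: The $n$-body problem in ${\bf H}^2$ (Weierstrass model): with the Lorentz inner product ${\bf a}\boxdot{\bf b}=a_xb_x+a_yb_y-a_zb_z$ on $\mathbb R^3$, ${\bf H}^2=\{(x,y,z): x^2+y^2-z^2=-1,\ z>0\}$. Bodies of masses $m_1,\dots,m_n>0$ have positions ${\bf q}_i=(x_i,y_i,z_i)\in{\bf H}^2$ and satisfy $$\ddot{\bf q}_i=\sum_{j\ne i}\frac{m_j[{\bf q}_j+({\bf q}_i\boxdot{\bf q}_j){\bf q}_i]}{[({\bf q}_i\boxdot{\bf q}_j)^2-1]^{3/2}}+(\dot{\bf q}_i\boxdot\dot{\bf q}_i){\bf q}_i,\qquad {\bf q}_i\boxdot{\bf q}_i=-1,\ \ {\bf q}_i\boxdot\dot{\bf q}_i=0,$$ $i=1,\dots,n$, defined only for collisionless configurations. The angular momentum $\sum_i m_i{\bf q}_i\boxtimes\dot{\bf q}_i$, where ${\bf a}\boxtimes{\bf b}=(a_yb_z-a_zb_y,\ a_zb_x-a_xb_z,\ a_yb_x-a_xb_y)$, is a first integral. *)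

(* Defs.v *)
From Stdlib Require Import Reals List Arith.
Open Scope R_scope.

Record V3 := mkV3 { vx : R; vy : R; vz : R }.

Definition vzero : V3 := mkV3 0 0 0.
Definition vadd (a b : V3) : V3 := mkV3 (vx a + vx b) (vy a + vy b) (vz a + vz b).
Definition vscal (k : R) (a : V3) : V3 := mkV3 (k * vx a) (k * vy a) (k * vz a).

Definition ldot (a b : V3) : R := vx a * vx b + vy a * vy b - vz a * vz b.

Definition vsum (f : nat -> V3) (l : list nat) : V3 :=
  fold_right (fun j acc => vadd (f j) acc) vzero l.

(* Right-hand side of the equations of motion for body i (bodies 0..n-1),
   given positions q and velocities v at time t. *)
Definition accel (n : nat) (m : nat -> R) (q v : nat -> R -> V3) (i : nat) (t : R) : V3 :=
  vadd
    (vsum (fun j =>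
       if Nat.eqb j i then vzero
       else vscal (m j / Rpower ((ldot (q i t) (q j t))^2 - 1) (3/2))
                  (vadd (q j t) (vscal (ldot (q i t) (q j t)) (q i t))))
       (seq 0 n))
    (vscal (ldot (v i t) (v i t)) (q i t)).

Definition has_deriv (f g : R -> V3) : Prop :=
  forall t : R,
    derivable_pt_lim (fun s => vx (f s)) t (vx (g t)) /\
    derivable_pt_lim (fun s => vy (f s)) t (vy (g t)) /\
    derivable_pt_lim (fun s => vz (f s)) t (vz (g t)).

(* q is a solution of the n-body problem in H^2, defined for all t in R:
   twice differentiable, positions in H^2 (q⊡q = -1, z > 0), velocities
   tangent (q⊡q' = 0), collisionless, and satisfying the equations. *)
Definition is_solution (n : nat) (m : nat -> R) (q : nat -> R -> V3) : Prop :=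
  exists v acc : nat -> R -> V3,
    forall i : nat, (i < n)%nat ->
      has_deriv (q i) (v i) /\ has_deriv (v i) (acc i) /\
      forall t : R,
        ldot (q i t) (q i t) = -1 /\ 0 < vz (q i t) /\
        ldot (q i t) (v i t) = 0 /\
        (forall j : nat, (j < n)%nat -> j <> i -> q i t <> q j t) /\
        acc i t = accel n m q v i t.

Definition parabolic (a b c : nat -> R) (i : nat) (t : R) : V3 :=
  mkV3 (a i - b i * t + c i * t)
       (a i * t + b i * (1 - t^2/2) + c i * t^2/2)
       (a i * t - b i * t^2/2 + c i * (1 + t^2/2)).

(* Main.v *)
Require Import Defs.
From Stdlib Require Import Reals List Arith Lra Lia FunctionalExtensionality.
Open Scope R_scope.

Definition rsum (f : nat -> R) (l : list nat) : R :=
  fold_right (fun j acc => f j + acc) 0 l.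

Definition cx (p w : V3) : R := vy p * vz w - vz p * vy w.

Lemma rsum_ext_in f g l : (forall j, In j l -> f j = g j) -> rsum f l = rsum g l.
Proof.
  induction l as [|x l IH]; intros H; simpl; auto.
  rewrite H by (left; auto). rewrite IH; auto. intros j Hj; apply H; right; auto.
Qed.

Lemma rsum_zero l : rsum (fun _ => 0) l = 0.
Proof. induction l; simpl; [auto | rewrite IHl; ring]. Qed.

Lemma rsum_add f g l : rsum (fun j => f j + g j) l = rsum f l + rsum g l.
Proof. induction l; simpl; [ring | rewrite IHl; ring]. Qed.

Lemma rsum_opp f l : rsum (fun j => - f j) l = - rsum f l.
Proof. induction l; simpl; [ring | rewrite IHl; ring]. Qed.

Lemma rsum_swap (G : nat -> nat -> R) l1 l2 :
  rsum (fun i => rsum (G i) l2) l1 = rsum (fun j => rsum (fun i => G i j) l1) l2.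
Proof.
  induction l1 as [|x l1 IH]; simpl.
  - symmetry; apply rsum_zero.
  - rewrite IH. rewrite <- rsum_add. reflexivity.
Qed.

Lemma antisym_zero (G : nat -> nat -> R) l :
  (forall i j, G j i = - G i j) -> rsum (fun i => rsum (G i) l) l = 0.
Proof.
  intros H.
  assert (E : rsum (fun i => rsum (G i) l) l = - rsum (fun i => rsum (G i) l) l).
  { rewrite rsum_swap at 1. rewrite <- rsum_opp.
    apply rsum_ext_in; intros j _. rewrite <- rsum_opp.
    apply rsum_ext_in; intros i _. apply H. }
  lra.
Qed.

Lemma cx_vsum p f l : cx p (vsum f l) = rsum (fun j => cx p (f j)) l.
Proof.
  unfold vsum, rsum; induction l; simpl; unfold cx in *; simpl; [ring | rewrite <- IHl; ring].
Qed.

Lemma nonneg_sum f l : (forall j, In j l -> 0 <= f j) -> 0 <= rsum f l.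
Proof.
  induction l as [|x l IH]; intros H; simpl; [lra|].
  assert (0 <= f x) by (apply H; left; auto).
  assert (0 <= rsum f l) by (apply IH; intros; apply H; right; auto). lra.
Qed.

Lemma deriv_quad (p r u t : R) :
  derivable_pt_lim (fun s => p + r * s + u * s ^ 2) t (r + 2 * u * t).
Proof.
  assert (H := derivable_pt_lim_plus _ _ t _ _
     (derivable_pt_lim_plus _ _ t _ _ (derivable_pt_lim_const p t)
        (derivable_pt_lim_scal _ r t _ (derivable_pt_lim_id t)))
     (derivable_pt_lim_scal _ u t _ (derivable_pt_lim_pow t 2))).
  unfold plus_fct, mult_real_fct, fct_cte, id in H. simpl in H.
  replace (r + 2 * u * t) with (0 + r * 1 + u * ((1 + 1) * (t * 1))) by ring. exact H.
Qed.

Lemma deriv_quad' (p r u t L : R) : L = r + 2 * u * t ->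
  derivable_pt_lim (fun s => p + r * s + u * s ^ 2) t L.
Proof. intros ->; apply deriv_quad. Qed.

Lemma deriv_eq (f : R -> R) g t l : (forall s, f s = g s) -> derivable_pt_lim g t l -> derivable_pt_lim f t l.
Proof. intros H D. replace f with g; auto. apply functional_extensionality; intros; auto. Qed.

Theorem mainTheorem19 :
  forall (n : nat) (m : nat -> R),
    (1 <= n)%nat ->
    (forall i : nat, (i < n)%nat -> 0 < m i) ->
    ~ (exists a b c : nat -> R,
          (forall i : nat, (i < n)%nat -> a i ^ 2 + b i ^ 2 - c i ^ 2 = -1) /\
          is_solution n m (parabolic a b c)).
Proof.
  intros n m Hn Hm [a [b [c [Hc [v [acc Hs]]]]]].
  set (q := parabolic a b c) in *.
  assert (Hacc : forall i, (i < n)%nat -> vy (acc i 0) = c i - b i /\ vz (acc i 0) = c i - b i).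
  { intros i Hi. destruct (Hs i Hi) as [Dq [Dv _]].
    assert (Vy : forall t, vy (v i t) = a i + (c i - b i) * t).
    { intro t. destruct (Dq t) as [_ [Dy _]].
      eapply uniqueness_limite. exact Dy.
      eapply deriv_eq; [| apply (deriv_quad' (b i) (a i) ((c i - b i)/2) t); field].
      intro s; unfold q, parabolic; simpl; field. }
    assert (Vz : forall t, vz (v i t) = a i + (c i - b i) * t).
    { intro t. destruct (Dq t) as [_ [_ Dz]].
      eapply uniqueness_limite. exact Dz.
      eapply deriv_eq; [| apply (deriv_quad' (c i) (a i) ((c i - b i)/2) t); field].
      intro s; unfold q, parabolic; simpl; field. }
    destruct (Dv 0) as [_ [Dy Dz]]. split.
    - eapply uniqueness_limite. exact Dy.
      eapply deriv_eq; [exact Vy|].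
      eapply deriv_eq; [| apply (deriv_quad' (a i) (c i - b i) 0 0); ring].
      intro s; simpl; ring.
    - eapply uniqueness_limite. exact Dz.
      eapply deriv_eq; [exact Vz|].
      eapply deriv_eq; [| apply (deriv_quad' (a i) (c i - b i) 0 0); ring].
      intro s; simpl; ring. }
  set (G := fun i j => m i * (if Nat.eqb j i then 0 else
              m j / Rpower ((ldot (q i 0) (q j 0))^2 - 1) (3/2) * cx (q i 0) (q j 0))).
  assert (HG : forall i, (i < n)%nat -> m i * cx (q i 0) (acc i 0) = rsum (G i) (seq 0 n)).
  { intros i Hi. destruct (Hs i Hi) as [_ [_ Ht]]. destruct (Ht 0) as [_ [_ [_ [_ E]]]].
    rewrite E. unfold accel.
    assert (cx (q i 0) (vadd (vsum (fun j =>
       if Nat.eqb j i then vzero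
       else vscal (m j / Rpower ((ldot (q i 0) (q j 0))^2 - 1) (3/2))
                  (vadd (q j 0) (vscal (ldot (q i 0) (q j 0)) (q i 0)))) (seq 0 n))
       (vscal (ldot (v i 0) (v i 0)) (q i 0)))
      = cx (q i 0) (vsum (fun j =>
       if Nat.eqb j i then vzero
       else vscal (m j / Rpower ((ldot (q i 0) (q j 0))^2 - 1) (3/2))
                  (vadd (q j 0) (vscal (ldot (q i 0) (q j 0)) (q i 0)))) (seq 0 n))) as ->.
    { unfold cx; simpl; ring. }
    rewrite cx_vsum. unfold rsum. generalize (seq 0 n). intro l.
    induction l as [|x l IH]; simpl; [ring|]. rewrite <- IH. unfold G.
    destruct (Nat.eqb x i); unfold cx; simpl; ring. }
  assert (Hsum : rsum (fun i => m i * cx (q i 0) (acc i 0)) (seq 0 n) = 0).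
  { rewrite (rsum_ext_in _ (fun i => rsum (G i) (seq 0 n))).
    - apply antisym_zero. intros i j. unfold G.
      rewrite (Nat.eqb_sym i j). destruct (Nat.eqb j i); [ring|].
      replace (ldot (q j 0) (q i 0)) with (ldot (q i 0) (q j 0)) by (unfold ldot; ring).
      unfold cx, Rdiv; ring.
    - intros j Hj. apply in_seq in Hj. apply HG. lia. }
  assert (Hterm : forall i, (i < n)%nat -> m i * cx (q i 0) (acc i 0) = - (m i * (c i - b i)^2)).
  { intros i Hi. destruct (Hacc i Hi) as [E1 E2]. unfold cx. rewrite E1, E2.
    unfold q, parabolic; simpl; field. }
  rewrite (rsum_ext_in _ (fun i => - (m i * (c i - b i)^2))) in Hsum
    by (intros j Hj; apply in_seq in Hj; apply Hterm; lia).
  rewrite rsum_opp in Hsum.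
  destruct n as [|n']; [lia|].
  replace (seq 0 (S n')) with (0%nat :: seq 1 n') in Hsum by reflexivity.
  unfold rsum in Hsum; cbn [fold_right] in Hsum; fold (rsum (fun i => m i * (c i - b i)^2) (seq 1 n')) in Hsum.
  assert (P : 0 <= rsum (fun i => m i * (c i - b i)^2) (seq 1 n')).
  { apply nonneg_sum. intros j Hj. apply in_seq in Hj.
    assert (0 < m j) by (apply Hm; lia). apply Rmult_le_pos; [lra | apply pow2_ge_0]. }
  assert (H0 : 0 < m 0%nat) by (apply Hm; lia).
  assert (Hd : c 0%nat - b 0%nat <> 0).
  { intro E. assert (Hc0 := Hc 0%nat ltac:(lia)).
    assert (c 0%nat = b 0%nat) by lra. rewrite H in Hc0.
    assert (0 <= a 0%nat ^ 2) by apply pow2_ge_0. lra. }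
  assert (0 < m 0%nat * (c 0%nat - b 0%nat)^2).
  { apply Rmult_lt_0_compat; auto. simpl; rewrite Rmult_1_r; apply Rsqr_pos_lt; auto. }
  lra.
Qed.
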